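(* Let $n\ge3$, $\tau>0$, $\varepsilon\neq0$, and $\kappa\in so(n)$ fixed. Consider the generalized Demchenko case without twisting: curves $(\omega(t),\gamma(t))\in so(n)\times S^{n-1}$ with $\omega\in\mathbb R^n\wedge\gamma$ satisfying $$\tau\dot\omega=[\kappa,\omega]+\lambda_0,\qquad \dot\gamma=-\varepsilon\omega\gamma,$$ where $\lambda_0(t)\in so(n)$ is orthogonal to $\mathbb R^n\wedge\gamma$ (and is determined by the condition $\omega\in\mathbb R^n\wedge\gamma$). These equations reduce to the system on $T^*S^{n-1}=\{(\gamma,p):\langle\gamma,\gamma\rangle=1,\langle\gamma,p\rangle=0\}$ $$\dot\gamma=\frac{\varepsilon^2}\tau p,\qquad \dot p=\frac1\tau\kappa p+\mu\gamma,\qquad \mu=\frac1\tau\langle p,\kappa\gamma\rangle-\frac{\varepsilon^2}\tau\langle p,p\rangle,$$ which is the magnetic geodesic flow with Hamiltonian $h=\frac{\varepsilon^2}{2\tau}\langle p,p\rangle$ with respect to the Poisson bracket $$\{F,G\}_d=\{F,G\}^\kappa-\frac{\{F,\phi_1\}^\kappa\{G,\phi_2\}^\kappa-\{F,\phi_2\}^\kappa\{G,\phi_1\}^\kappa}{\{\phi_1,\phi_2\}^\kappa},$$ restricted to $T^*S^{n-1}$, where $\phi_1=\langle\gamma,\gamma\rangle$, $\phi_2=\langle\gamma,p\rangle$ and $\{F,G\}^\kappa=\sum_i\big(\frac{\partial F}{\partial\gamma_i}\frac{\partial G}{\partial p_i}-\frac{\partial F}{\partial p_i}\frac{\partial G}{\partial\gamma_i}\big)+\frac1{\varepsilon^2}\sum_{i,j}\kappa_{ij}\frac{\partial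 F}{\partial p_i}\frac{\partial G}{\partial p_j}$.
   Context: Physically: a balanced $n$-dimensional ball with gyroscope rolls without slipping and twisting over a fixed sphere, with $\varepsilon=b/(b\pm a)$ ($a,b$ the radii), and the modified inertia operator is $\mathbf I=\tau\,\mathrm{Id}_{so(n)}$. On $so(n)$, $\langle X,Y\rangle=-\frac12\operatorname{tr}(XY)$; on $\mathbb R^n$ the Euclidean product; $x\wedge y=xy^T-yx^T$; $\mathbb R^n\wedge\gamma=\{x\wedge\gamma:x\in\mathbb R^n\}$; $\kappa_{ij}$ are the entries of $\kappa$. ''Reduce'' means: for a solution, $p=\frac\tau{\varepsilon^2}\dot\gamma$ and $(\gamma,p)$ solves the stated system. *)

(* Defs.v *)
From HB Require Import structures.
From mathcomp Require Import all_boot all_order all_algebra.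
From mathcomp Require Import all_classical all_reals all_analysis.
Set Implicit Arguments. Unset Strict Implicit. Unset Printing Implicit Defensive.
Import Order.TTheory GRing.Theory Num.Theory.
Import numFieldNormedType.Exports.
Local Open Scope ring_scope.

Section Defs.
Variables (R : realType) (n : nat).

Definition so (A : 'M[R]_n) : Prop := A^T = - A.

Definition ip (x y : 'cV[R]_n) : R := (x^T *m y) 0 0.

Definition ipso (X Y : 'M[R]_n) : R := - (2%:R)^-1 * \tr (X *m Y).

Definition wedge (x y : 'cV[R]_n) : 'M[R]_n := x *m y^T - y *m x^T.

Definition comm (A B : 'M[R]_n) : 'M[R]_n := A *m B - B *m A.

Definition evec (i : 'I_n) : 'cV[R]_n := delta_mx i 0.

Definition mx_deriv m k (f : R -> 'M[R]_(m, k)) (t : R) (df : 'M[R]_(m, k)) : Prop :=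
  forall i j, is_derive t (1 : R) (fun s => f s i j) (df i j).

Definition dgam (F : 'cV[R]_n -> 'cV[R]_n -> R) (i : 'I_n) g p : R :=
  derive1 (fun s : R => F (g + s *: evec i) p) 0.
Definition dp (F : 'cV[R]_n -> 'cV[R]_n -> R) (i : 'I_n) g p : R :=
  derive1 (fun s : R => F g (p + s *: evec i)) 0.

Definition kbracket (eps : R) (kappa : 'M[R]_n) (F G : 'cV[R]_n -> 'cV[R]_n -> R)
  (g p : 'cV[R]_n) : R :=
  \sum_i (dgam F i g p * dp G i g p - dp F i g p * dgam G i g p)
  + (eps ^+ 2)^-1 * \sum_i \sum_j kappa i j * dp F i g p * dp G j g p.

Definition phi1 (g p : 'cV[R]_n) : R := ip g g.
Definition phi2 (g p : 'cV[R]_n) : R := ip g p.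

Definition dbracket (eps : R) (kappa : 'M[R]_n) (F G : 'cV[R]_n -> 'cV[R]_n -> R)
  (g p : 'cV[R]_n) : R :=
  kbracket eps kappa F G g p
  - (kbracket eps kappa F phi1 g p * kbracket eps kappa G phi2 g p
     - kbracket eps kappa F phi2 g p * kbracket eps kappa G phi1 g p)
    / kbracket eps kappa phi1 phi2 g p.

Definition ham (eps tau : R) (g p : 'cV[R]_n) : R := eps ^+ 2 / (2%:R * tau) * ip p p.

Definition gcoord (i : 'I_n) (g p : 'cV[R]_n) : R := g i 0.
Definition pcoord (i : 'I_n) (g p : 'cV[R]_n) : R := p i 0.

End Defs.

(* Main.v *)
Require Import Defs.
From HB Require Import structures.
From mathcomp Require Import all_boot all_order all_algebra.
From mathcomp Require Import all_classical all_reals all_analysis.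
From mathcomp Require Import ring lra.
Import Order.TTheory GRing.Theory Num.Theory.
Import numFieldNormedType.Exports.
Local Open Scope ring_scope.
Local Open Scope classical_set_scope.
Set Implicit Arguments. Unset Strict Implicit.

Lemma quad_deriv (R : realType) (f : R -> R) (A B C : R) :
  (forall s, f s = A + s * B + s ^+ 2 * C) -> derive1 f 0 = B.
Proof.
move=> hf.
have -> : f = cst A + B \*: (@id R) + C \*: ((@id R) ^+ 2).
  apply/funext => s; rewrite hf /= !fctE /= /GRing.scale /=. ring.
set g := (X in derive1 X).
rewrite (derive1E g 0).
have H := (is_deriveD (is_deriveD (is_derive_cst A (0:R) (1:R)) (is_deriveZ B (is_derive_id (0:R) (1:R)))) (is_deriveZ C (is_deriveX 2 (is_derive_id (0:R) (1:R))))).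
rewrite /g (derive_val (is_derive:=H)) /GRing.scale /=. ring.
Qed.

Section Helpers.
Variables (R : realType) (n : nat).
Implicit Types (a b c u w g p : 'cV[R]_n).

Lemma ipE a b : ip a b = \sum_k a k 0 * b k 0.
Proof. by rewrite /ip !mxE; apply: eq_bigr => k _; rewrite mxE. Qed.

Lemma ipC a b : ip a b = ip b a.
Proof. by rewrite !ipE; apply: eq_bigr => k _; rewrite mulrC. Qed.

Lemma ipDr a b c : ip a (b + c) = ip a b + ip a c.
Proof. by rewrite !ipE -big_split; apply: eq_bigr => k _; rewrite mxE mulrDr. Qed.

Lemma ipZr a b (k : R) : ip a (k *: b) = k * ip a b.
Proof. by rewrite !ipE mulr_sumr; apply: eq_bigr => j _; rewrite mxE mulrCA. Qed.

Lemma ipNr a b : ip a (- b) = - ip a b.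
Proof. by rewrite -scaleN1r ipZr mulN1r. Qed.

Lemma ipBr a b c : ip a (b - c) = ip a b - ip a c.
Proof. by rewrite ipDr ipNr. Qed.

Lemma ipDl a b c : ip (b + c) a = ip b a + ip c a.
Proof. by rewrite ipC ipDr ![ip a _]ipC. Qed.

Lemma ipZl a b (k : R) : ip (k *: b) a = k * ip b a.
Proof. by rewrite ipC ipZr ipC. Qed.

Lemma ipBl a b c : ip (b - c) a = ip b a - ip c a.
Proof. by rewrite ipC ipBr ![ip a _]ipC. Qed.

Lemma evecE (j i : 'I_n) : evec R j i 0 = (i == j)%:R.
Proof. by rewrite /evec mxE andbT. Qed.

Lemma sum_delta (F : 'I_n -> R) i : \sum_j (i == j)%:R * F j = F i.
Proof.
rewrite (bigD1 i) //= eqxx mul1r big1 ?addr0 // => j /negbTE.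
by rewrite eq_sym => ->; rewrite mul0r.
Qed.

Lemma ip_evec b j : ip (evec R j) b = b j 0.
Proof.
rewrite ipE (eq_bigr (fun k => (j == k)%:R * b k 0)) ?sum_delta // => k _.
by rewrite evecE eq_sym.
Qed.

Lemma derive_ip a u b w :
  derive1 (fun s : R => ip (a + s *: u) (b + s *: w)) 0 = ip a w + ip u b.
Proof.
apply: (@quad_deriv R _ (ip a b) _ (ip u w)) => s.
rewrite !ipDl !ipDr !ipZl !ipZr. ring.
Qed.

Variables (eps tau : R) (kappa : 'M[R]_n).

Lemma dgam_gc i j g p : dgam (gcoord i) j g p = (i == j)%:R.
Proof.
apply: (@quad_deriv R _ (g i 0) _ (0)) => s.
by rewrite /gcoord !mxE eqxx andbT; ring.
Qed.
Lemma dp_gc i j g p : dp (gcoord i) j g p = 0.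
Proof. apply: (@quad_deriv R _ (g i 0) _ (0)) => s; rewrite /gcoord; ring. Qed.
Lemma dgam_pc i j g p : dgam (pcoord i) j g p = 0.
Proof. apply: (@quad_deriv R _ (p i 0) _ (0)) => s; rewrite /pcoord; ring. Qed.
Lemma dp_pc i j g p : dp (pcoord i) j g p = (i == j)%:R.
Proof.
apply: (@quad_deriv R _ (p i 0) _ (0)) => s.
by rewrite /pcoord !mxE eqxx andbT; ring.
Qed.
Lemma dgam_ham j g p : dgam (ham eps tau) j g p = 0.
Proof. apply: (@quad_deriv R _ (ham eps tau g p) _ (0)) => s; rewrite /ham; ring. Qed.
Lemma dp_ham j g p : dp (ham eps tau) j g p = eps ^+ 2 / tau * p j 0.
Proof.
apply: (@quad_deriv R _ (ham eps tau g p) _ (eps ^+ 2 / (2%:R * tau) * ip (evec R j) (evec R j))) => s.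
rewrite /ham !ipDl !ipDr !ipZl !ipZr [ip p (evec R j)]ipC ip_evec.
have h2 : (2%:R : R) != 0 by rewrite pnatr_eq0.
have e : tau^-1 = (2%:R * tau)^-1 * 2%:R.
  by rewrite invfM mulrC mulrA mulfV // mul1r.
rewrite e; ring.
Qed.
Lemma dgam_phi1 j g p : dgam (@phi1 R n) j g p = 2%:R * g j 0.
Proof.
rewrite /dgam /phi1 derive_ip ipC ip_evec. ring.
Qed.
Lemma dp_phi1 j g p : dp (@phi1 R n) j g p = 0.
Proof. apply: (@quad_deriv R _ (ip g g) _ (0)) => s; rewrite /phi1; ring. Qed.
Lemma dgam_phi2 j g p : dgam (@phi2 R n) j g p = p j 0.
Proof.
apply: (@quad_deriv R _ (ip g p) _ (0)) => s.
rewrite /phi2 ipDl ipZl ip_evec; ring.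
Qed.
Lemma dp_phi2 j g p : dp (@phi2 R n) j g p = g j 0.
Proof.
apply: (@quad_deriv R _ (ip g p) _ (0)) => s.
rewrite /phi2 ipDr ipZr [ip g (evec R j)]ipC ip_evec; ring.
Qed.


Lemma ip_mx a (A : 'M[R]_n) b :
  ip a (A *m b) = \sum_i \sum_j A i j * a i 0 * b j 0.
Proof.
rewrite ipE; apply: eq_bigr => i _; rewrite mxE mulr_sumr.
by apply: eq_bigr => j _; ring.
Qed.

Lemma mx_sum (A : 'M[R]_n) b i : (A *m b) i 0 = \sum_j A i j * b j 0.
Proof. by rewrite mxE. Qed.

Notation kb := (kbracket eps kappa).
Notation e2t := (eps ^+ 2 / tau).

Lemma K1 i g p : kb (gcoord i) (ham eps tau) g p = e2t * p i 0.
Proof.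
rewrite /kbracket (eq_bigr (fun j => (i == j)%:R * (e2t * p j 0))); last first.
  by move=> j _; rewrite dgam_gc dp_ham dp_gc dgam_ham; ring.
rewrite sum_delta big1 ?mulr0 ?addr0 // => i' _; rewrite big1 // => j _.
rewrite dp_gc; ring.
Qed.

Lemma K2 i g p : kb (gcoord i) (@phi1 R n) g p = 0.
Proof.
rewrite /kbracket big1; last by move=> j _; rewrite dp_gc dp_phi1; ring.
rewrite big1 ?mulr0 ?addr0 // => i' _; rewrite big1 // => j _.
rewrite dp_gc; ring.
Qed.

Lemma K3 g p : kb (ham eps tau) (@phi2 R n) g p =
  - e2t * ip p p + (eps ^+ 2)^-1 * (e2t * ip p (kappa *m g)).
Proof.
rewrite /kbracket (eq_bigr (fun j => - e2t * (p j 0 * p j 0))); last first.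
  by move=> j _; rewrite dgam_ham dp_ham dgam_phi2; ring.
rewrite -mulr_sumr -ipE ip_mx; congr (_ + _ * _).
rewrite mulr_sumr; apply: eq_bigr => i' _; rewrite mulr_sumr.
by apply: eq_bigr => j _; rewrite dp_ham dp_phi2; ring.
Qed.

Lemma K4 i g p : kb (gcoord i) (@phi2 R n) g p = g i 0.
Proof.
rewrite /kbracket (eq_bigr (fun j => (i == j)%:R * g j 0)); last first.
  by move=> j _; rewrite dgam_gc dp_phi2 dp_gc; ring.
rewrite sum_delta big1 ?mulr0 ?addr0 // => i' _; rewrite big1 // => j _.
rewrite dp_gc; ring.
Qed.

Lemma K5 g p : kb (ham eps tau) (@phi1 R n) g p = - (e2t * 2%:R) * ip p g.
Proof.
rewrite /kbracket (eq_bigr (fun j => - (e2t * 2%:R) * (p j 0 * g j 0))); last first.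
  by move=> j _; rewrite dgam_ham dp_ham dp_phi1 dgam_phi1; ring.
rewrite -mulr_sumr -ipE big1 ?mulr0 ?addr0 // => i' _; rewrite big1 // => j _.
rewrite dp_phi1; ring.
Qed.

Lemma K6 g p : kb (@phi1 R n) (@phi2 R n) g p = 2%:R * ip g g.
Proof.
rewrite /kbracket (eq_bigr (fun j => 2%:R * (g j 0 * g j 0))); last first.
  by move=> j _; rewrite dgam_phi1 dp_phi1 dp_phi2; ring.
rewrite -mulr_sumr -ipE big1 ?mulr0 ?addr0 // => i' _; rewrite big1 // => j _.
rewrite dp_phi1; ring.
Qed.

Lemma K7 i g p : kb (pcoord i) (ham eps tau) g p =
  (eps ^+ 2)^-1 * (e2t * (kappa *m p) i 0).
Proof.
rewrite /kbracket big1; last by move=> j _; rewrite dgam_pc dgam_ham; ring.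
rewrite add0r mx_sum mulr_sumr; congr (_ * _).
rewrite (eq_bigr (fun i' => (i == i')%:R * \sum_j kappa i' j * (e2t * p j 0))); last first.
  move=> i' _; rewrite mulr_sumr; apply: eq_bigr => j _; rewrite dp_pc dp_ham; ring.
rewrite sum_delta; apply: eq_bigr => j _; ring.
Qed.

Lemma K8 i g p : kb (pcoord i) (@phi1 R n) g p = - (2%:R * g i 0).
Proof.
rewrite /kbracket (eq_bigr (fun j => (i == j)%:R * (- (2%:R * g j 0)))); last first.
  by move=> j _; rewrite dgam_pc dp_pc dgam_phi1; ring.
rewrite sum_delta big1 ?mulr0 ?addr0 // => i' _; rewrite big1 // => j _.
rewrite dp_phi1; ring.
Qed.

Lemma K9 i g p : kb (pcoord i) (@phi2 R n) g p =
  - p i 0 + (eps ^+ 2)^-1 * (kappa *m g) i 0.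
Proof.
rewrite /kbracket (eq_bigr (fun j => (i == j)%:R * (- p j 0))); last first.
  by move=> j _; rewrite dgam_pc dp_pc dgam_phi2; ring.
rewrite sum_delta mx_sum; congr (_ + _ * _).
rewrite (eq_bigr (fun i' => (i == i')%:R * \sum_j kappa i' j * g j 0)); last first.
  move=> i' _; rewrite mulr_sumr; apply: eq_bigr => j _; rewrite dp_pc dp_phi2; ring.
by rewrite sum_delta.
Qed.


Lemma mul_ip m (y : 'M[R]_(m, 1)) a b : y *m (a^T *m b) = ip a b *: y.
Proof. by rewrite [a^T *m b]mx11_scalar mul_mx_scalar. Qed.

Lemma wedge_mul (x g y : 'cV[R]_n) : wedge x g *m y = ip g y *: x - ip x y *: g.
Proof. by rewrite /wedge mulmxBl -!mulmxA !mul_ip. Qed.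

Lemma ip_tr a (A : 'M[R]_n) b : ip a (A *m b) = ip b (A^T *m a).
Proof.
rewrite !ip_mx exchange_big; apply: eq_bigr => i _; apply: eq_bigr => j _.
by rewrite mxE; ring.
Qed.

Lemma skew0 (A : 'M[R]_n) g : so A -> ip g (A *m g) = 0.
Proof.
move=> hA; have h : ip g (A *m g) = - ip g (A *m g).
  by rewrite {1}ip_tr hA mulNmx ipNr.
have h2 : 2%:R * ip g (A *m g) = 0 by rewrite mulr2n mulrDl mul1r {1}h addNr.
by move: h2 => /eqP; rewrite mulf_eq0 pnatr_eq0 /= => /eqP.
Qed.

Lemma ip_self0 (z : 'cV[R]_n) : ip z z = 0 -> z = 0.
Proof.
rewrite ipE => h.
apply/matrixP => k j; rewrite (ord1 j) mxE.
have : z k 0 * z k 0 = 0.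
  apply: (psumr_eq0P _ h) => // i _; rewrite -expr2; exact: sqr_ge0.
by move/eqP; rewrite mulf_eq0 orbb => /eqP.
Qed.

Lemma tr1 (A : 'M[R]_1) : \tr A = A 0 0.
Proof. by rewrite /mxtrace big_ord1. Qed.

Lemma tr_outer (A : 'M[R]_n) u v : \tr (A *m (u *m v^T)) = ip v (A *m u).
Proof. by rewrite mulmxA mxtrace_mulC tr1. Qed.

Lemma lam_g (L : 'M[R]_n) (g : 'cV[R]_n) :
  so L -> (forall x, ipso L (wedge x g) = 0) -> L *m g = 0.
Proof.
move=> hL hx; apply: ip_self0.
have := hx (L *m g); rewrite /ipso /wedge mulmxBr raddfB /=.
rewrite !tr_outer ip_tr hL mulNmx ipNr => h.
set X := ip _ _ in h *; by rewrite -h; field.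
Qed.


Lemma key (x g : 'cV[R]_n) (L dw : 'M[R]_n) :
  tau != 0 -> eps != 0 -> so kappa -> ip g g = 1 -> L *m g = 0 ->
  tau *: dw = comm kappa (wedge x g) + L ->
  let w := wedge x g in let dg := - eps *: (w *m g) in
  let P := (tau / eps ^+ 2) *: dg in
  (tau / eps ^+ 2 * - eps) *: (w *m dg + dw *m g) =
  tau^-1 *: (kappa *m P) + (tau^-1 * ip P (kappa *m g) - eps ^+ 2 / tau * ip P P) *: g.
Proof.
move=> ht he hk hgg hLg hT w dg P.
have hdw : dw = tau^-1 *: (comm kappa w + L) by rewrite -hT scalerA mulVf // scale1r.
have wg : w *m g = x - ip x g *: g by rewrite wedge_mul hgg scale1r.
have wkg : w *m (kappa *m g) = - (ip x (kappa *m g)) *: g.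
  by rewrite wedge_mul skew0 // scale0r sub0r scaleNr.
have wv : w *m (x - ip x g *: g) = - ip x (x - ip x g *: g) *: g.
  by rewrite wedge_mul ipBr ipZr hgg [ip g x]ipC mulr1 subrr scale0r sub0r scaleNr.
have gkg : ip g (kappa *m g) = 0 by apply: skew0.
rewrite /P /dg hdw /comm; clearbody w.
rewrite -!scalemxAl -!scalemxAr !mulmxDl !mulNmx -!mulmxA.
rewrite wg wkg wv hLg.
rewrite !mulmxBr -!scalemxAr.
rewrite !ipZl !ipZr !ipBl !ipBr !ipZl !ipZr [ip g x]ipC hgg gkg.
move: (kappa *m x) (kappa *m g) => kx kg.
apply/matrixP => i j; rewrite !mxE. by field; rewrite he ht.
Qed.

End Helpers.

Theorem proposition9p2 (R : realType) (n : nat) (tau eps : R) (kappa : 'M[R]_n)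
  (I : set R)
  (omega : R -> 'M[R]_n) (domega : R -> 'M[R]_n)
  (gamma : R -> 'cV[R]_n) (dgamma : R -> 'cV[R]_n)
  (lambda0 : R -> 'M[R]_n) :
  (3 <= n)%N -> 0 < tau -> eps != 0 -> so kappa -> open I ->
  (forall t, I t -> mx_deriv omega t (domega t)) ->
  (forall t, I t -> mx_deriv gamma t (dgamma t)) ->
  (forall t, I t -> ip (gamma t) (gamma t) = 1) ->
  (forall t, I t -> exists x : 'cV[R]_n, omega t = wedge x (gamma t)) ->
  (forall t, I t -> so (lambda0 t)) ->
  (forall t, I t -> forall x : 'cV[R]_n, ipso (lambda0 t) (wedge x (gamma t)) = 0) ->
  (forall t, I t -> tau *: domega t = comm kappa (omega t) + lambda0 t) ->
  (forall t, I t -> dgamma t = - eps *: (omega t *m gamma t)) ->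
  let p := fun t => (tau / eps ^+ 2) *: dgamma t in
  forall t, I t ->
    let mu := tau^-1 * ip (p t) (kappa *m gamma t) - eps ^+ 2 / tau * ip (p t) (p t) in
    [/\ ip (gamma t) (gamma t) = 1 /\ ip (gamma t) (p t) = 0,
        dgamma t = (eps ^+ 2 / tau) *: p t,
        mx_deriv p t (tau^-1 *: (kappa *m p t) + mu *: gamma t)
      & forall i : 'I_n,
          dgamma t i 0 = dbracket eps kappa (gcoord i) (ham eps tau) (gamma t) (p t)
          /\ (tau^-1 *: (kappa *m p t) + mu *: gamma t) i 0
             = dbracket eps kappa (pcoord i) (ham eps tau) (gamma t) (p t)].
Proof.
move=> hn ht he hk oI hdom hdg hgg hx hL hLo hT hdgam p t It mu.
have ht0 : tau != 0 by rewrite gt_eqF.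
have [x hw] := hx t It.
have hLg : lambda0 t *m gamma t = 0 := lam_g (hL t It) (hLo t It).
have hdgt := hdgam t It.
have hg1 := hgg t It.
have hgp : ip (gamma t) (p t) = 0.
  rewrite /p ipZr hdgt ipZr hw wedge_mul ipBr !ipZr [ip (gamma t) x]ipC; ring.
have hdp : dgamma t = (eps ^+ 2 / tau) *: p t.
  rewrite /p scalerA [X in _ = X *: _](_ : _ = 1) ?scale1r //.
  by field; rewrite he ht0.
have hTt := hT t It; rewrite hw in hTt.
have K := key ht0 he hk hg1 hLg hTt.
move: K; rewrite /= -hw -hdgt => K.
split => //.
- move=> i j.
  have K' : tau^-1 *: (kappa *m p t) + mu *: gamma t =
     (tau / eps ^+ 2 * - eps) *: (omega t *m dgamma t + domega t *m gamma t).
    exact: (esym K).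
  rewrite K'.
  set c := tau / eps ^+ 2 * - eps.
  have hder : forall k, is_derive t 1 ((fun s => omega s i k) * (fun s => gamma s k j))
      (omega t i k *: dgamma t k j + gamma t k j *: domega t i k).
    move=> k; apply: is_deriveM; [exact: hdom | exact: hdg].
  have H := is_deriveZ c (is_derive_sum hder).
  apply: is_derive_eq.
  + apply: near_eq_is_derive H.
    apply: filterS (open_nbhs_nbhs (conj oI It)) => s Is.
    rewrite /p fct_sumE /= hdgam // !mxE /c /GRing.scale /= [RHS]mulrA.
    by congr (_ * _); apply: eq_bigr => k _.
  + rewrite !mxE -big_split /=; congr (_ * _); apply: eq_bigr => k _.
    rewrite /GRing.scale /=; ring.
move=> i; split.
- rewrite /dbracket K1 K2 K4 K3 K5 K6 [ip (p t) (gamma t)]ipC hgp hg1 hdp !mxE.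
  by field; rewrite he ht0.
- rewrite /dbracket K7 K8 K3 K9 K5 K6 [ip (p t) (gamma t)]ipC hgp hg1 /mu !mxE.
  by field; rewrite he ht0.
Qed.
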